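(* Let $(k,\alpha)\in\Upsilon$, $u\in\operatorname{rext}(L_{k,\alpha})$ and $x\in\Sigma_k$. Then there is $\bar u\in\operatorname{rext}(u,L_{k,\alpha})$ such that the letter $x$ is a recurrent factor of $\bar u$.
   Context: $\Sigma_k$ is an alphabet with $k$ letters. For a nonempty finite word $r$ and a rational $\beta\ge 1$ with $\beta|r|$ an integer, the $\beta$-power $r^\beta$ is the word $rr\cdots rt$ of length $\beta|r|$, where $t$ is a prefix of $r$. For rational $\alpha\ge1$, a word is $\alpha$-power free if it has no factor that is a $\beta$-power with $\beta\ge\alpha$, and $\alpha^+$-power free if it has no factor that is a $\beta$-power with $\beta>\alpha$; ''$\alpha$'' may denote a rational number or a symbol $\alpha^+$. $L_{k,\alpha}$ is the set of finite $\alpha$-power free words over $\Sigma_k$. $\Upsilon$ is the set of pairs: $(k,\alpha)$ with $k=3$ and rational $\alpha>2$; $(k,\alpha)$ with $k>3$ and rational $\alpha\ge2$; $(k,\alpha^+)$ with $k\ge3$ and rational $\alpha\ge2$. A word $w\in L$ is right extendable in $L$ if for every $n$ there is $v\in L$ with $|v|=n$ and $wv\in L$; $\operatorname{rext}(L)$ is the set of such words, and for $u\in\operatorname{rext}(L)$, $\operatorname{rext}(u,L)$ is the set of right infinite words all of whose finite prefixes lie in $L$ and which have $u$ as a prefix. A factor is recurrent in an infinite word if it occurs infinitely often. *)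

(* Defs.v *)
From HB Require Import structures.
From mathcomp Require Import all_boot all_order all_algebra.
Set Implicit Arguments. Unset Strict Implicit. Unset Printing Implicit Defensive.
Import Order.TTheory GRing.Theory Num.Theory.

Definition word (k : nat) := seq 'I_k.

Definition infword (k : nat) := nat -> 'I_k.

Definition iprefix k (w : infword k) (n : nat) : word k := mkseq w n.

Definition factor k (f w : word k) : Prop := exists s t : word k, w = s ++ f ++ t.

(* w = r^beta with beta = |w|/|r| >= 1, i.e. w = r r ... r t with t a prefix of r:
   r nonempty, |r| <= |w|, and the i-th letter of w is the (i mod |r|)-th letter of r. *)
Definition is_power_of k (w r : word k) : Prop :=
  0 < size r /\ size r <= size w /\
  forall (i : nat) (x0 : 'I_k), i < size w -> nth x0 w i = nth x0 r (i %% size r).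

Definition exponent k (w r : word k) : rat := ((size w)%:R / (size r)%:R)%R.

(* An exponent "alpha" is a rational a together with a flag [plus]:
   plus = false means alpha = a, plus = true means alpha = a^+. *)
Definition power_free k (a : rat) (plus : bool) (w : word k) : Prop :=
  forall f r : word k, factor f w -> is_power_of f r ->
    if plus then (exponent f r <= a)%R else (exponent f r < a)%R.

Definition inL k (a : rat) (plus : bool) (w : word k) : Prop := power_free a plus w.

Definition rext k (a : rat) (plus : bool) (w : word k) : Prop :=
  inL a plus w /\
  forall n : nat, exists v : word k, size v = n /\ inL a plus (w ++ v).

Definition rext_of k (a : rat) (plus : bool) (u : word k) (ubar : infword k) : Prop :=
  (forall n : nat, inL a plus (iprefix ubar n)) /\ iprefix ubar (size u) = u.

Definition recurrent_letter k (x : 'I_k) (ubar : infword k) : Prop :=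
  forall N : nat, exists i : nat, N <= i /\ ubar i = x.

Definition Upsilon (k : nat) (a : rat) (plus : bool) : Prop :=
  (k = 3 /\ plus = false /\ (2 < a)%R) \/
  (3 < k /\ plus = false /\ (2 <= a)%R) \/
  (3 <= k /\ plus = true /\ (2 <= a)%R).

(* Main.v *)
Require Import Defs.
From mathcomp Require Import all_boot all_order all_algebra.
From mathcomp Require Import zify.
From Stdlib Require Import Classical ClassicalEpsilon.
Set Implicit Arguments. Unset Strict Implicit. Unset Printing Implicit Defensive.
Import Order.TTheory GRing.Theory Num.Theory.

Definition Ext k a plus (w : word k) :=
  forall n, exists v : word k, size v = n /\ inL a plus (w ++ v).
Definition Free k a plus (z : infword k) := forall m, inL a plus (iprefix z m).

Lemma inL_prefix k a plus (s t : word k) : inL a plus (s ++ t) -> inL a plus s.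
Proof.
move=> H f r [s1 [t1 E]] Hp; apply: H Hp; exists s1, (t1 ++ t).
by rewrite E -!catA.
Qed.

Lemma mkseqD T (f : nat -> T) a b :
  mkseq f (a + b) = mkseq f a ++ mkseq (fun i => f (a + i)) b.
Proof.
by rewrite /mkseq iotaD map_cat add0n -{2}(addn0 a) iotaDl -map_comp.
Qed.

Lemma mkseq_factor k (z : infword k) m st len : st + len <= m ->
  factor (mkseq (fun i => z (st + i)) len) (mkseq z m).
Proof.
move=> H; exists (mkseq z st), (mkseq (fun i => z (st + len + i)) (m - st - len)).
have E : m = st + (len + (m - st - len)) by lia.
rewrite {1}E mkseqD mkseqD; congr (_ ++ (_ ++ _)).
by apply: eq_mkseq => i /=; rewrite addnA.
Qed.

Lemma factor_mkseq k (z : infword k) m f : factor f (mkseq z m) ->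
  exists st, st + size f <= m /\ f = mkseq (fun i => z (st + i)) (size f).
Proof.
move=> [s [t E]]; exists (size s).
have Hsz : size s + (size f + size t) = m.
  by move: (f_equal size E); rewrite size_mkseq !size_cat => ->.
split; first lia.
have Hf : f = take (size f) (drop (size s) (mkseq z m)).
  by rewrite E drop_size_cat // take_size_cat.
rewrite {1}Hf -Hsz mkseqD drop_size_cat ?size_mkseq // mkseqD take_size_cat //.
by rewrite size_mkseq.
Qed.

Lemma pow_period k (f r : word k) x0 : is_power_of f r ->
  forall i, i + size r < size f -> nth x0 f i = nth x0 f (i + size r).
Proof.
move=> [H0 [H1 H2]] i Hi; rewrite !H2 ?modnDr //; lia.
Qed.

Lemma exp_ge2 k (a : rat) (f r : word k) : (2 <= a)%R -> (a <= exponent f r)%R ->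
  0 < size r -> 2 * size r <= size f.
Proof.
rewrite /exponent => Ha Hb Hr.
have : (2%:R <= (size f)%:R / (size r)%:R :> rat)%R by exact: le_trans Ha Hb.
by rewrite ler_pdivlMr ?ltr0n // -natrM ler_nat.
Qed.

Lemma goal_of k (a : rat) (plus : bool) (f r : word k) :
  ~ (a <= exponent f r)%R -> if plus then (exponent f r <= a)%R else (exponent f r < a)%R.
Proof.
move=> H; case: plus.
  by rewrite leNgt; apply/negP => /ltW.
by rewrite ltNge; apply/negP.
Qed.

Lemma const_contra k (a : rat) plus (z : infword k) : (2 <= a)%R -> Free a plus z ->
  forall N c, (forall i, N <= i -> z i = c) -> False.
Proof.
move=> Ha Hz N c Hc.
have Ha0 : (0 <= a)%R by apply: le_trans Ha; rewrite ler0n.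
set M := Num.Def.archi_bound a.
have HM : (a < M%:R)%R by exact: archi_boundP.
have HM0 : 0 < M.
  rewrite lt0n; apply/negP => /eqP H0; move: HM; rewrite H0.
  by rewrite ltNge Ha0.
have Hf : nseq M c = mkseq (fun i => z (N + i)) M.
  apply: (@eq_from_nth _ c); rewrite ?size_nseq ?size_mkseq // => i Hi.
  by rewrite nth_nseq nth_mkseq // Hi Hc // leq_addr.
have Hfac := mkseq_factor z (leqnn (N + M)).
rewrite -Hf in Hfac.
have Hp : is_power_of (nseq M c) [:: c].
  split=> //; split; first by rewrite size_nseq.
  move=> i x0; rewrite size_nseq => Hi; by rewrite nth_nseq Hi modn1.
have := Hz (N + M) _ _ Hfac Hp.
rewrite /exponent size_nseq /= divr1.
case: plus in Hz *; [by rewrite leNgt HM | by rewrite ltNge (ltW HM)].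
Qed.

Lemma core k (z z' : infword k) (x : 'I_k) (n q j s e R : nat) :
  (forall i, n <= i -> z i != x) -> (forall p, z p = x -> p <= q /\ z q = x) ->
  q < n -> 3 * n <= j -> z j.+1 != z q.+1 ->
  (forall i, z' i = if i == j then x else z i) ->
  s <= j < e -> 0 < R -> s + 2 * R <= e ->
  (forall i, s <= i -> i + R < e -> z' i = z' (i + R)) -> False.
Proof.
move=> Hn Hq Hqn Hj Hjq Hz' /andP [Hsj Hje] HR HsR Hper.
have Hej : e <= j + R.
  rewrite leqNgt; apply/negP => H.
  have := Hper j Hsj H.
  rewrite !Hz' eqxx.
  have -> : (j + R == j) = false by apply/negP => /eqP; lia.
  move=> E; have := Hn (j + R) ltac:(lia); by rewrite -E eqxx.
set p := j - R.
have Hpx : z p = x.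
  have := Hper p ltac:(lia) ltac:(lia).
  rewrite !Hz'.
  have -> : (p == j) = false by apply/negP => /eqP; lia.
  have -> : p + R = j by lia.
  by rewrite eqxx.
have [Hpq Hqx] := Hq p Hpx.
have Hm : forall t, p + 1 + t + R < e -> z (p + 1 + t) = z (j + 1 + t).
  move=> t Ht; have := Hper (p + 1 + t) ltac:(lia) Ht.
  rewrite !Hz'.
  have -> : (p + 1 + t == j) = false by apply/negP => /eqP; lia.
  have -> : (p + 1 + t + R == j) = false by apply/negP => /eqP; lia.
  by have -> : p + 1 + t + R = j + 1 + t by lia.
have [Hlt | Heq] : p < q \/ p = q by lia.
  have := Hm (q - p - 1) ltac:(lia).
  have -> : p + 1 + (q - p - 1) = q by lia.
  rewrite Hqx => E.
  have := Hn (j + 1 + (q - p - 1)) ltac:(lia); by rewrite -E eqxx.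
have := Hm 0 ltac:(lia).
rewrite !addn0 !addn1 Heq => E.
by move: Hjq; rewrite E eqxx.
Qed.

Lemma eq_in_mkseq T (f g : nat -> T) n : (forall i, i < n -> f i = g i) ->
  mkseq f n = mkseq g n.
Proof.
move=> H; rewrite /mkseq; apply/eq_in_map => i; rewrite mem_iota => /andP [_ Hi].
by apply: H; rewrite add0n in Hi.
Qed.

Lemma free_mod k (a : rat) plus (z z' : infword k) (x : 'I_k) (n q j : nat) :
  (2 <= a)%R -> Free a plus z ->
  (forall i, n <= i -> z i != x) -> (forall p, z p = x -> p <= q /\ z q = x) ->
  q < n -> 3 * n <= j -> z j.+1 != z q.+1 ->
  (forall i, z' i = if i == j then x else z i) -> Free a plus z'.
Proof.
move=> Ha Hz Hn Hq Hqn Hj Hjq Hz' m f r Hfac Hp.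
have [st [Hst Hf]] := factor_mkseq Hfac.
have E : forall i, i < size f -> nth x f i = z' (st + i).
  by move=> i Hi; rewrite {1}Hf nth_mkseq.
case Hin: (st <= j < st + size f).
  apply: goal_of => Hae.
  have [H0 [H1 H2]] := Hp.
  have H2R := exp_ge2 Ha Hae H0.
  apply: (@core k z z' x n q j st (st + size f) (size r)) => //.
    lia.
  move=> i Hi1 Hi2.
  have := pow_period x Hp (i := i - st) ltac:(lia).
  rewrite !E; try lia.
  have -> : st + (i - st) = i by lia.
  by have -> : st + (i - st + size r) = i + size r by lia.
have Hf' : f = mkseq (fun i => z (st + i)) (size f).
  rewrite {1}Hf; apply: eq_in_mkseq => i Hi; rewrite Hz'.
  case: eqP => // Hij; move: Hin; rewrite Hij; lia.
apply: (Hz m f r) => //.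
by rewrite Hf'; apply: mkseq_factor.
Qed.

Lemma ext_nil k a plus (w : word k) : Ext a plus w -> inL a plus w.
Proof.
move=> H; have [v [Hv Hl]] := H 0.
by move: Hv Hl; case: v => // _; rewrite cats0.
Qed.

Lemma inL_take k a plus (w : word k) m : inL a plus w -> inL a plus (take m w).
Proof. by move=> H; apply: (@inL_prefix _ _ _ _ (drop m w)); rewrite cat_take_drop. Qed.

Lemma ext_step k a plus (w : word k) : Ext a plus w -> exists c, Ext a plus (w ++ [:: c]).
Proof.
move=> H; apply: NNPP => Hn.
have Hc : forall c : 'I_k, exists n, ~ exists v : word k, size v = n /\ inL a plus ((w ++ [:: c]) ++ v).
  move=> c; apply: NNPP => H1; apply: Hn; exists c => n.
  apply: NNPP => H2; apply: H1; by exists n.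
pose nc := fun c => proj1_sig (constructive_indefinite_description _ (Hc c)).
have Hnc : forall c, ~ exists v : word k, size v = nc c /\ inL a plus ((w ++ [:: c]) ++ v).
  by move=> c; rewrite /nc; case: constructive_indefinite_description.
pose N := \max_(c : 'I_k) nc c.
have [v [Hv Hl]] := H N.+1.
move: Hv Hl; case: v => // c v' [Hv'] Hl.
apply: (Hnc c); exists (take (nc c) v'); split.
  rewrite size_takel // Hv'; exact: leq_bigmax_cond.
apply: (@inL_prefix _ _ _ _ (drop (nc c) v')).
by rewrite -catA cat_take_drop -catA.
Qed.

Lemma prefix_mono k (W : nat -> word k) : (forall n, exists t, W n.+1 = W n ++ t) ->
  forall n d, exists t, W (n + d) = W n ++ t.
Proof.
move=> H n; elim=> [|d [t Ht]]; first by exists [::]; rewrite addn0 cats0.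
have [t' Ht'] := H (n + d); exists (t ++ t'); by rewrite addnS Ht' Ht catA.
Qed.

Lemma limit k a plus (W : nat -> word k) (x0 : 'I_k) :
  (forall n, exists t, W n.+1 = W n ++ t) -> (forall n, n < size (W n.+1)) ->
  (forall n, inL a plus (W n)) ->
  (forall n i, i < size (W n) -> nth x0 (W i.+1) i = nth x0 (W n) i) /\
  Free a plus (fun i => nth x0 (W i.+1) i).
Proof.
move=> Hs Hsz HL.
have Hm := prefix_mono Hs.
have Hagree : forall n i, i < size (W n) -> nth x0 (W i.+1) i = nth x0 (W n) i.
  move=> n i Hi.
  have [t1 E1] := Hm n i.+1; have [t2 E2] := Hm i.+1 n.
  have E : W (n + i.+1) = W (i.+1 + n) by rewrite addnC.
  rewrite E2 E1 in E.
  have := f_equal (fun s => nth x0 s i) E.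
  by rewrite /= !nth_cat Hi (Hsz i).
split=> // m.
have -> : iprefix (fun i => nth x0 (W i.+1) i) m = take m (W m.+1).
  apply: (@eq_from_nth _ x0); rewrite size_mkseq ?size_takel //; first exact: ltnW.
  move=> i Hi; rewrite nth_mkseq // nth_take // (Hagree m.+1) //.
  exact: (leq_trans Hi (ltnW (Hsz m))).
exact: inL_take.
Qed.

Lemma konig k a plus (w : word k) (x0 : 'I_k) : Ext a plus w ->
  exists z, Free a plus z /\ iprefix z (size w) = w.
Proof.
move=> Hw.
have Hg : forall v : word k, exists c, Ext a plus v -> Ext a plus (v ++ [:: c]).
  move=> v; case: (classic (Ext a plus v)) => Hv.
    have [c Hc] := ext_step Hv; by exists c.
  by exists x0.
pose g := fun v => proj1_sig (constructive_indefinite_description _ (Hg v)).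
have Hgs : forall v, Ext a plus v -> Ext a plus (v ++ [:: g v]).
  by move=> v; rewrite /g; case: constructive_indefinite_description.
pose W := nat_rect (fun _ => word k) w (fun _ v => v ++ [:: g v]).
have WS : forall n, W n.+1 = W n ++ [:: g (W n)] by [].
have WE : forall n, Ext a plus (W n) by elim=> [|n IH] //; rewrite WS; apply: Hgs.
have Wsz : forall n, size (W n) = size w + n.
  by elim=> [|n IH]; rewrite ?addn0 // WS size_cat IH /= addn1 addnS.
have Hsz : forall n, n < size (W n.+1) by move=> n; rewrite Wsz; lia.
have [Hag Hfree] := limit x0 (fun n => ex_intro _ _ (WS n)) Hsz (fun n => ext_nil (WE n)).
exists (fun i => nth x0 (W i.+1) i); split => //.
apply: (@eq_from_nth _ x0); rewrite size_mkseq // => i Hi.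
by rewrite nth_mkseq // (Hag 0).
Qed.

Lemma free_ext k a plus (z : infword k) m : Free a plus z -> Ext a plus (iprefix z m).
Proof.
move=> Hz n; exists (mkseq (fun i => z (m + i)) n); split; first by rewrite size_mkseq.
by rewrite /iprefix -mkseqD; apply: Hz.
Qed.

Lemma split_pref k (z : infword k) (w : word k) j x : iprefix z (size w) = w ->
  size w <= j -> z j = x ->
  iprefix z j.+1 = w ++ mkseq (fun t => z (size w + t)) (j - size w) ++ [:: x].
Proof.
move=> Hw Hj Hx.
have E : j.+1 = size w + ((j - size w) + 1) by lia.
rewrite /iprefix E mkseqD mkseqD /= -/(iprefix z (size w)) Hw.
have -> : mkseq (fun i => z (size w + (j - size w + i))) 1 = [:: x].
  rewrite /mkseq /=; have -> : size w + (j - size w + 0) = j by lia.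
  by rewrite Hx.
by [].
Qed.

Lemma qexists k (z : infword k) x N : exists q, q <= N /\
  forall p, p < N -> z p = x -> p <= q /\ z q = x.
Proof.
elim: N => [|N [q [HqN Hq]]]; first by exists 0.
case: (eqVneq (z N) x) => HN.
  exists N; split=> // p Hp _; split=> //; lia.
exists q; split; first lia.
move=> p Hp Hpx; apply: Hq => //.
have : p != N by apply/eqP => E; move: HN; rewrite -E Hpx eqxx.
lia.
Qed.

Lemma step k a plus (w : word k) (x : 'I_k) : (2 <= a)%R -> Ext a plus w ->
  exists y, Ext a plus (w ++ y ++ [:: x]).
Proof.
move=> Ha Hw; have [z [Hz Hzw]] := konig x Hw.
case: (classic (exists i, size w <= i /\ z i = x)) => [[i [Hi Hzi]] | Hno].
  exists (mkseq (fun t => z (size w + t)) (i - size w)).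
  rewrite -(split_pref Hzw Hi Hzi); exact: free_ext.
set n := size w + 1.
have Hn : forall i, n <= i -> z i != x.
  move=> i Hi; apply/eqP => E; apply: Hno; exists i; split=> //; lia.
have [q [Hqw Hq0]] := qexists z x (size w).
have Hq : forall p, z p = x -> p <= q /\ z q = x.
  move=> p Hp; apply: Hq0 => //; rewrite ltnNge; apply/negP => Hle.
  by apply: Hno; exists p.
have [j [Hj Hjq]] : exists j, 3 * n <= j /\ z j.+1 != z q.+1.
  apply: NNPP => H; apply: (const_contra Ha Hz (N := (3 * n).+1) (c := z q.+1)).
  move=> i Hi; apply/eqP; apply: NNPP => Hne; apply: H; exists i.-1; split; first lia.
  rewrite prednK; [by apply/negP | lia].
pose z' := fun i => if i == j then x else z i.
have Hz' : Free a plus z'.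
  apply: (@free_mod k a plus z z' x n q j) => //; lia.
have Hz'w : iprefix z' (size w) = w.
  rewrite -[RHS]Hzw /iprefix; apply: eq_in_mkseq => i Hi; rewrite /z'.
  case: eqP => // E; lia.
have Hjw : size w <= j by lia.
exists (mkseq (fun t => z' (size w + t)) (j - size w)).
rewrite -(split_pref Hz'w Hjw (x := x)); first exact: free_ext.
by rewrite /z' eqxx.
Qed.

Theorem mainTheorem9 (k : nat) (a : rat) (plus : bool) (u : word k) (x : 'I_k) :
  Upsilon k a plus -> rext a plus u ->
  exists ubar : infword k, rext_of a plus u ubar /\ recurrent_letter x ubar.
Proof.
move=> HU [HuL Hu].
have Ha : (2 <= a)%R.
  by case: HU => [[_ [_ H]]|[[_ [_ H]]|[_ [_ H]]]] //; exact: ltW.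
have Hh : forall v : word k, exists y, Ext a plus v -> Ext a plus (v ++ y ++ [:: x]).
  move=> v; case: (classic (Ext a plus v)) => Hv.
    by have [y Hy] := step x Ha Hv; exists y.
  by exists [::].
pose h := fun v => proj1_sig (constructive_indefinite_description _ (Hh v)).
have Hhs : forall v, Ext a plus v -> Ext a plus (v ++ h v ++ [:: x]).
  by move=> v; rewrite /h; case: constructive_indefinite_description.
pose V := nat_rect (fun _ => word k) u (fun _ v => v ++ h v ++ [:: x]).
have VS : forall n, V n.+1 = V n ++ (h (V n) ++ [:: x]) by [].
have VE : forall n, Ext a plus (V n) by elim=> [|n IH] //; rewrite VS; apply: Hhs.
have Vsz : forall n, n + size u <= size (V n).
  elim=> [|n IH] //; rewrite VS !size_cat /=; lia.
have Hsz : forall n, n < size (V n.+1).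
  by move=> n; apply: leq_trans (Vsz n.+1); rewrite ltnS leq_addr.
have [Hag Hfree] := limit x (fun n => ex_intro _ _ (VS n)) Hsz (fun n => ext_nil (VE n)).
exists (fun i => nth x (V i.+1) i); split.
  split=> //.
  apply: (@eq_from_nth _ x); rewrite size_mkseq // => i Hi.
  by rewrite nth_mkseq // (Hag 0).
move=> N.
set s := V N ++ h (V N).
have Hs : V N.+1 = rcons s x by rewrite VS catA cats1.
have HsN : N <= size s.
  have := Vsz N; rewrite /s size_cat; lia.
exists (size s); split=> //.
rewrite (Hag N.+1); last by rewrite Hs size_rcons.
by rewrite Hs nth_rcons ltnn eqxx.
Qed.
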